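(* In the setting described in the context, let $\sigma_w,\sigma_v$ be real scalars and consider the system $$\tilde\Sigma_\tau(s)=R^T\big(sI+L_{e,s}^\tau RWR^T\big)^{-1}\begin{bmatrix}\sigma_wD_\tau^TE^{-1/2} & -\sigma_vL_{e,s}^\tau RW^{1/2}\end{bmatrix}.$$ Then $\|\tilde\Sigma_\tau\|_\infty^2=\bar\sigma(Z)$, where $$Z=\sigma_w^2R^T\big(RWR^TL_{e,s}^\tau RWR^T\big)^{-1}R+\sigma_v^2R^T\big(RWR^T\big)^{-1}R.$$
   Context: Let $\mathcal G$ be an undirected, connected graph without self-loops, with node set $\{1,\dots,n\}$ ($n\ge2$) and edge set $\mathcal E$, $m=|\mathcal E|$. Give each edge an arbitrary orientation; the incidence matrix $D\in\mathbb R^{n\times m}$ has $D_{il}=1$ if node $i$ is the initial node of edge $l$, $-1$ if it is the terminal node, and $0$ otherwise. Fix a spanning tree $\mathcal G_\tau$ and order the edges so the first $n-1$ are tree edges; write $D=[D_\tau\ D_c]$ with $D_\tau\in\mathbb R^{n\times(n-1)}$. Set $T_\tau^c=(D_\tau^TD_\tau)^{-1}D_\tau^TD_c$ and $R=[I_{n-1}\ T_\tau^c]\in\mathbb R^{(n-1)\times m}$. Let $W=\mathrm{diag}(w_1,\dots,w_m)$, $w_l>0$, and $E=\mathrm{diag}(\epsilon_1,\dots,\epsilon_n)$, $\epsilon_i>0$; $W^{1/2},E^{-1/2}$ are taken entrywise on the diagonal. Define $L_{e,s}^\tau=D_\tau^TE^{-1}D_\tau$. For a stable transfer matrix $\Phi(s)$,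 $\|\Phi\|_\infty=\sup_{\omega\in\mathbb R}\bar\sigma(\Phi(j\omega))$ where $\bar\sigma$ is the largest singular value. *)

(* Defs.v *)
From HB Require Import structures.
From mathcomp Require Import all_boot all_order all_algebra.
From mathcomp Require Import complex.
From mathcomp Require Import classical_sets reals.
Set Implicit Arguments.
Unset Strict Implicit.
Unset Printing Implicit Defensive.
Import Order.TTheory GRing.Theory Num.Theory.
Local Open Scope ring_scope.
Local Open Scope classical_set_scope.

(* ---------- Graph data ----------
   A graph on nodes 'I_n with m edges; edge l has (arbitrary) orientation
   src l -> dst l. *)
Definition no_self_loops (n m : nat) (src dst : 'I_m -> 'I_n) : Prop :=
  forall l, src l != dst l.

Definition distinct_edges (n m : nat) (src dst : 'I_m -> 'I_n) : Prop :=
  forall l l', l != l' ->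
    ~ ((src l = src l' /\ dst l = dst l') \/ (src l = dst l' /\ dst l = src l')).

Definition adj_in (n m : nat) (src dst : 'I_m -> 'I_n) (S : pred 'I_m) : rel 'I_n :=
  fun x y => [exists l, (l \in S) &&
                ((src l == x) && (dst l == y) || (src l == y) && (dst l == x))].

Definition connected_in (n m : nat) (src dst : 'I_m -> 'I_n) (S : pred 'I_m) : Prop :=
  forall x y : 'I_n, connect (adj_in src dst S) x y.

Definition spanning_tree (n m : nat) (src dst : 'I_m -> 'I_n) (S : pred 'I_m) : Prop :=
  connected_in src dst S /\ #|S| = n.-1.

Definition incidence (R : realType) (n m : nat) (src dst : 'I_m -> 'I_n) : 'M[R]_(n, m) :=
  \matrix_(i, l) ((i == src l)%:R - (i == dst l)%:R).

Definition conjT (R : realType) (p q : nat) (A : 'M[R[i]]_(p, q)) : 'M[R[i]]_(q, p) :=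
  (map_mx Num.conj A)^T.

(* largest singular value: square root of the largest eigenvalue of A^H A
   (these eigenvalues are real and nonnegative) *)
Definition sigma_max (R : realType) (p q : nat) (A : 'M[R[i]]_(p, q)) : R :=
  Num.sqrt (sup [set x : R | eigenvalue (conjT A *m A) (x%:C)%C]).

Definition sigma_max_real (R : realType) (p q : nat) (A : 'M[R]_(p, q)) : R :=
  sigma_max (map_mx (fun x : R => (x%:C)%C) A).

Definition hinf_norm (R : realType) (p q : nat) (Phi : R[i] -> 'M[R[i]]_(p, q)) : R :=
  sup [set sigma_max (Phi (0 +i* w)%C) | w in [set: R]].

(* ---------- The objects of the paper ----------
   n = k.+1 nodes, tree edges are the first k, then c cotree edges. *)
Section Objects.
Variables (R : realType) (k c : nat).
Variables (src dst : 'I_(k + c) -> 'I_k.+1).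
Variables (w : 'I_(k + c) -> R) (eps : 'I_k.+1 -> R).

Definition D : 'M[R]_(k.+1, k + c) := incidence R src dst.
Definition Dtau : 'M[R]_(k.+1, k) := lsubmx D.
Definition Dc : 'M[R]_(k.+1, c) := rsubmx D.
Definition Ttc : 'M[R]_(k, c) := invmx (Dtau^T *m Dtau) *m Dtau^T *m Dc.
Definition Rm : 'M[R]_(k, k + c) := row_mx 1%:M Ttc.
Definition Wm : 'M[R]_(k + c) := diag_mx (\row_l w l).
Definition Whalf : 'M[R]_(k + c) := diag_mx (\row_l Num.sqrt (w l)).
Definition Einv : 'M[R]_(k.+1) := diag_mx (\row_i (eps i)^-1).
Definition Einvhalf : 'M[R]_(k.+1) := diag_mx (\row_i (Num.sqrt (eps i))^-1).
Definition Les : 'M[R]_k := Dtau^T *m Einv *m Dtau.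

Definition toC (p q : nat) (A : 'M[R]_(p, q)) : 'M[R[i]]_(p, q) :=
  map_mx (fun x : R => (x%:C)%C) A.

Definition Sigma_tilde (sw sv : R) (s : R[i]) : 'M[R[i]]_(k + c, k.+1 + (k + c)) :=
  toC Rm^T *m invmx (s%:M + toC (Les *m Rm *m Wm *m Rm^T))
    *m row_mx (toC (sw *: (Dtau^T *m Einvhalf)))
              (toC (- (sv *: (Les *m Rm *m Whalf)))).

Definition Zm (sw sv : R) : 'M[R]_(k + c) :=
  sw ^+ 2 *: (Rm^T *m invmx (Rm *m Wm *m Rm^T *m Les *m Rm *m Wm *m Rm^T) *m Rm)
  + sv ^+ 2 *: (Rm^T *m invmx (Rm *m Wm *m Rm^T) *m Rm).
End Objects.

(* Main.v *)
Require Import Defs.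
From HB Require Import structures.
From mathcomp Require Import all_boot all_order all_algebra.
From mathcomp Require Import complex spectral.
From mathcomp Require Import classical_sets reals.
From mathcomp Require Import zify.
From Stdlib Require Import Classical.
Import Order.TTheory GRing.Theory Num.Theory.
Local Open Scope ring_scope.
Set Implicit Arguments. Unset Strict Implicit. Unset Printing Implicit Defensive.
Section Gen.
Variable R : realType.
Local Notation C := (R[i]).

Lemma conjT_mul p q r (A : 'M[C]_(p, q)) (B : 'M[C]_(q, r)) :
  conjT (A *m B) = conjT B *m conjT A.
Proof. by rewrite /conjT map_mxM trmx_mul. Qed.

Lemma conjTK p q (A : 'M[C]_(p, q)) : conjT (conjT A) = A.
Proof. by apply/matrixP => i j; rewrite !mxE conjCK. Qed.

Lemma conjT_toC p q (A : 'M[R]_(p, q)) : conjT (toC A) = toC A^T.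
Proof. by apply/matrixP => i j; rewrite !mxE; exact: conjc_real. Qed.

Definition nrm2 p (u : 'rV[C]_p) : C := (u *m conjT u) 0 0.

Lemma nrm2E p (u : 'rV[C]_p) : nrm2 u = \sum_j u 0 j * Num.conj (u 0 j).
Proof. by rewrite /nrm2 mxE; apply: eq_bigr => j _; rewrite !mxE. Qed.

Lemma nrm2_ge0 p (u : 'rV[C]_p) : 0 <= nrm2 u.
Proof. rewrite nrm2E; apply: sumr_ge0 => j _; exact: mul_conjC_ge0. Qed.

Lemma nrm2_eq0 p (u : 'rV[C]_p) : nrm2 u = 0 -> u = 0.
Proof.
rewrite nrm2E => /psumr_eq0P H; apply/rowP => j; rewrite mxE.
have /eqP := H (fun i _ => mul_conjC_ge0 _) j isT.
by rewrite mulf_eq0 conjC_eq0 orbb => /eqP.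
Qed.

Lemma nrm2_gt0 p (u : 'rV[C]_p) : u != 0 -> 0 < nrm2 u.
Proof.
move=> u0; rewrite lt_def nrm2_ge0 andbT; apply/eqP => /nrm2_eq0 h.
by rewrite h eqxx in u0.
Qed.

Lemma quad_diag p (w : 'rV[C]_p) (d : 'rV[C]_p) :
  (w *m diag_mx d *m conjT w) 0 0 = \sum_j d 0 j * (w 0 j * Num.conj (w 0 j)).
Proof.
rewrite mxE; apply: eq_bigr => j _; rewrite mul_mx_diag !mxE.
by rewrite mulrA (mulrC (d 0 j)).
Qed.

Lemma quad_nrm2 p q (u : 'rV[C]_p) (Y : 'M[C]_(p, q)) :
  (u *m (Y *m conjT Y) *m conjT u) 0 0 = nrm2 (u *m Y).
Proof. by rewrite /nrm2 conjT_mul !mulmxA. Qed.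

Lemma ge0_Cre (x : C) : 0 <= x -> x = (complex.Re x)%:C%C.
Proof. by case: x => a b; rewrite lecE /= => /andP[/eqP -> _]. Qed.

Lemma spec_max n (i0 : 'I_n) p (Y : 'M[C]_(n, p)) :
  exists lam : R, [/\ 0 <= lam,
    (forall u : 'rV[C]_n, (u *m (Y *m conjT Y) *m conjT u) 0 0 <= lam%:C%C * nrm2 u) &
    exists2 u : 'rV[C]_n, u != 0 & u *m (Y *m conjT Y) = lam%:C%C *: u].
Proof.
set K := Y *m conjT Y.
have Kn : K \is normalmx.
  apply/normalmxP.
  suff -> : (K ^t*)%sesqui = K by [].
  apply/matrixP => i j; rewrite !mxE /K.
  by rewrite rmorph_sum; apply: eq_bigr => l _; rewrite !mxE rmorphM /= conjCK mulrC.
have /orthomx_spectralP KE := Kn.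
set P := spectralmx K in KE; set d := spectral_diag K in KE.
have Pu : P \is unitarymx by apply: spectral_unitarymx.
set Ph := conjT P.
have PPh : P *m Ph = 1%:M by have /unitarymxP := Pu; rewrite /Ph /conjT map_trmx.
have PhP : Ph *m P = 1%:M by apply: mulmx1C.
have KE' : K = Ph *m diag_mx d *m P.
  rewrite {1}KE; congr (_ *m _ *m _); rewrite invmx_unitary //.
  by rewrite /Ph /conjT map_trmx.
have quad : forall u : 'rV[C]_n, (u *m K *m conjT u) 0 0
    = \sum_j d 0 j * ((u *m Ph) 0 j * Num.conj ((u *m Ph) 0 j)).
  by move=> u; rewrite -quad_diag KE' conjT_mul /Ph conjTK !mulmxA.
have nrmPh : forall u : 'rV[C]_n, nrm2 (u *m Ph) = nrm2 u.
  by move=> u; rewrite /nrm2 conjT_mul /Ph conjTK mulmxA -(mulmxA u) -/Ph PhP mulmx1.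
have eK : forall j : 'I_n, (delta_mx 0 j : 'rV[C]_n) *m P *m Ph = delta_mx 0 j.
  by move=> j; rewrite -mulmxA PPh mulmx1.
have dge0 : forall j : 'I_n, 0 <= d 0 j.
  move=> j; have := nrm2_ge0 ((delta_mx 0 j : 'rV[C]_n) *m P *m Y).
  rewrite -quad_nrm2 -/K quad eK (bigD1 j) //= big1 ?addr0.
    by rewrite !mxE /= !eqxx /= mul1r conjC1 mulr1.
  by move=> i /negbTE ij; rewrite !mxE ij /= mul0r mulr0.
pose r j := complex.Re (d 0 j).
have dE : forall j, d 0 j = (r j)%:C%C by move=> j; apply: ge0_Cre.
have [im _ immax] := @arg_maxP _ _ _ i0 predT r isT.
exists (r im); split.
- by rewrite -lecR -dE.
- move=> u; rewrite quad -nrmPh nrm2E mulr_sumr; apply: ler_sum => j _.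
  apply: ler_wpM2r; first exact: mul_conjC_ge0.
  by rewrite dE lecR; apply: immax.
- exists ((delta_mx 0 im : 'rV[C]_n) *m P).
    apply/eqP => h; have := eK im; rewrite h mul0mx => /matrixP /(_ 0 im).
    by rewrite !mxE /= !eqxx /= => /esym/eqP; rewrite oner_eq0.
  rewrite KE' !mulmxA eK -rowE row_diag_mx -dE scalemxAl.
  by [].
Qed.

Lemma eig_quad p q (A : 'M[C]_(p, q)) (x : R) (v : 'rV[C]_q) :
  v *m (conjT A *m A) = x%:C%C *: v ->
  x%:C%C * nrm2 v = nrm2 (v *m conjT A).
Proof.
move=> h; rewrite -quad_nrm2 conjTK h -scalemxAl [RHS]mxE.
by [].
Qed.

Lemma eig_ge0 p q (A : 'M[C]_(p, q)) (x : R) :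
  eigenvalue (conjT A *m A) x%:C%C -> 0 <= x.
Proof.
move=> /eigenvalueP [v /eig_quad h v0].
have := nrm2_ge0 (v *m conjT A); rewrite -h.
by rewrite pmulr_lge0 ?nrm2_gt0 // ler0c.
Qed.

Lemma eig_bound p q (A : 'M[C]_(p, q)) (lam : R) :
  0 <= lam ->
  (forall u : 'rV[C]_p, (u *m (A *m conjT A) *m conjT u) 0 0 <= lam%:C%C * nrm2 u) ->
  forall x : R, eigenvalue (conjT A *m A) x%:C%C -> x <= lam.
Proof.
move=> lam0 hb x /eigenvalueP [v hv v0].
set u := v *m conjT A.
have [u0|u0] := eqVneq u 0.
  have : x%:C%C *: v = 0 by rewrite -hv mulmxA -/u u0 mul0mx.
  move/eqP; rewrite scalemx_eq0 (negbTE v0) orbF => /eqP.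
  by move=> /(congr1 (@complex.Re R)) /= ->.
have hu : u *m (A *m conjT A) = x%:C%C *: u.
  by rewrite /u !mulmxA -(mulmxA v) hv scalemxAl.
have := hb u; rewrite hu -scalemxAl mxE -/(nrm2 u).
by rewrite ler_pM2r ?nrm2_gt0 // lecR.
Qed.

Lemma sup_eq_max (E : set R) (a : R) : E a -> (forall x, E x -> x <= a) -> sup E = a.
Proof.
move=> Ea ub; apply/le_anti/andP; split.
  by apply: ge_sup; [exists a | move=> x /ub].
by apply: ub_le_sup => //; exists a => x /ub.
Qed.
Lemma conjTD p q (A B : 'M[C]_(p, q)) : conjT (A + B) = conjT A + conjT B.
Proof. by apply/matrixP => i j; rewrite !mxE rmorphD. Qed.

Lemma conjT_scalar p (a : C) : conjT (a%:M : 'M[C]_p) = (Num.conj a)%:M.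
Proof.
apply/matrixP => i j; rewrite !mxE eq_sym.
by rewrite raddfMn.
Qed.

Lemma conjTZ p q (a : C) (A : 'M[C]_(p, q)) : conjT (a *: A) = Num.conj a *: conjT A.
Proof. by apply/matrixP => i j; rewrite !mxE rmorphM. Qed.
Lemma sup_le_ub' (E : set R) (a : R) : 0 <= a -> (forall x, E x -> x <= a) -> sup E <= a.
Proof.
move=> a0 ub; have [[x Ex]|ne] := classic (exists x, E x).
  by apply: ge_sup; [exists x | move=> y /ub].
have -> : E = set0.
  by apply/seteqP; split => y // Ey; exfalso; apply: ne; exists y.
by rewrite sup0.
Qed.

Lemma sup_zero (E : set R) : (forall x, E x -> x = 0) -> sup E = 0.
Proof.
move=> h; have [[x Ex]|ne] := classic (exists x, E x).
  apply: sup_eq_max; first by rewrite -(h x Ex).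
  by move=> y /h ->.
have -> : E = set0.
  by apply/seteqP; split => y // Ey; exfalso; apply: ne; exists y.
by rewrite sup0.
Qed.

Lemma quad_add p (u : 'rV[C]_p) (A B : 'M[C]_p) (s : C) :
  (u *m (A + s *: B) *m conjT u) 0 0 = (u *m A *m conjT u) 0 0 + s * (u *m B *m conjT u) 0 0.
Proof. by rewrite mulmxDr mulmxDl -scalemxAr -scalemxAl mxE [X in _ + X]mxE. Qed.
End Gen.

Lemma sum_delta (F : ringType) n (y : 'I_n -> F) (s : 'I_n) :
  \sum_i y i * (i == s)%:R = y s.
Proof.
rewrite (bigD1 s) //= eqxx mulr1 big1 ?addr0 // => i /negbTE ->.
by rewrite mulr0.
Qed.

Lemma rank_Dtau (R : realType) k c (src dst : 'I_(k + c) -> 'I_k.+1) :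
  spanning_tree src dst [pred l : 'I_(k + c) | (l < k)%N] ->
  \rank (@Dtau R k c src dst) = k.
Proof.
move=> [conn _].
set D' := @Dtau R k c src dst.
have key : forall y : 'rV[R]_k.+1, y *m D' = 0 -> forall x, y 0 x = y 0 0.
  move=> y hy.
  have edge : forall l : 'I_(k + c), (l < k)%N -> y 0 (src l) = y 0 (dst l).
    move=> l lk; have /matrixP /(_ 0 (Ordinal lk)) := hy.
    have hl : lshift c (Ordinal lk) = l by apply: val_inj.
    have e : forall i, D' i (Ordinal lk) = (i == src l)%:R - (i == dst l)%:R.
      by move=> i; rewrite /D' /Dtau /D /incidence mxE mxE hl.
    rewrite mxE (eq_bigr (fun i => y 0 i * (i == src l)%:R - y 0 i * (i == dst l)%:R)).
      by rewrite sumrB !sum_delta mxE => /eqP; rewrite subr_eq0 => /eqP.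
    by move=> i _; rewrite e mulrBr.
  have cnx : forall a b, connect (adj_in src dst [pred l : 'I_(k + c) | (l < k)%N]) a b ->
      y 0 a = y 0 b.
    move=> a b /connectP [p pth ->]; elim: p a pth => [|z p IH] a //= /andP [ha hp].
    rewrite -(IH z hp); case/existsP: ha => l /andP [lk hl].
    case/orP: hl => /andP [/eqP <- /eqP <-]; rewrite edge //.
  by move=> x; rewrite (cnx x 0).
have sub : (kermx D' <= (const_mx 1 : 'rV[R]_k.+1))%MS.
  apply/row_subP => i.
  have /sub_kermxP hy : (row i (kermx D') <= kermx D')%MS by apply: row_sub.
  have -> : row i (kermx D') = (row i (kermx D')) 0 0 *: const_mx 1.
    by apply/rowP => x; rewrite (key _ hy x) !mxE mulr1.
  by apply: scalemx_sub.
have := mxrankS sub; rewrite mxrank_ker.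
have r1 : (\rank (const_mx 1%R : 'rV[R]_k.+1) <= 1)%N by apply: rank_leq_row.
have := rank_leq_col D'; lia.
Qed.

Section Alg.
Variables (F : fieldType) (n : nat) (L Q : 'M[F]_n).
Hypotheses (uL : L \in unitmx) (uQ : Q \in unitmx) (LT : L^T = L) (QT : Q^T = Q).
Variables a b : F.
Local Notation iL := (invmx L).
Local Notation iQ := (invmx Q).
Local Notation X := (a *: L + b *: (L *m Q *m L)).

Lemma invmx_mul' (A B : 'M[F]_n) : A \in unitmx -> B \in unitmx ->
  invmx (A *m B) = invmx B *m invmx A.
Proof.
move=> uA uB.
have uAB : A *m B \in unitmx by rewrite unitmx_mul uA uB.
have e : A *m B *m (invmx B *m invmx A) = 1%:M.
  by rewrite !mulmxA -(mulmxA A) mulmxV // mulmx1 mulmxV.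
by rewrite -[LHS]mulmx1 -e mulmxA mulVmx // mul1mx.
Qed.

Ltac canc := rewrite ?(mulmxK uL, mulmxKV uL, mulmxK uQ, mulmxKV uQ,
  mulVmx uL, mulmxV uL, mulVmx uQ, mulmxV uQ, mul1mx, mulmx1).

Lemma iLQ : invmx (L *m Q) = iQ *m iL.
Proof. by rewrite invmx_mul'. Qed.
Lemma iLQT : (invmx (L *m Q))^T = iL *m iQ.
Proof. by rewrite iLQ trmx_mul !trmx_inv LT QT. Qed.

Lemma alg_Kc : invmx (L *m Q) *m X *m (invmx (L *m Q))^T
  = a *: (iQ *m iL *m iQ) + b *: iQ.
Proof.
rewrite iLQT iLQ mulmxDr mulmxDl -!scalemxAr -!scalemxAl !mulmxA.
by canc.
Qed.

Lemma alg_inv3 : invmx (Q *m L *m Q) = iQ *m iL *m iQ.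
Proof. by rewrite invmx_mul' ?unitmx_mul ?uQ ?uL // invmx_mul' // mulmxA. Qed.

Lemma alg_comm : (L *m Q) *m (invmx (L *m Q) *m X *m (invmx (L *m Q))^T)
  = (invmx (L *m Q) *m X *m (invmx (L *m Q))^T) *m (L *m Q)^T.
Proof.
rewrite alg_Kc trmx_mul LT QT mulmxDr mulmxDl -!scalemxAr -!scalemxAl !mulmxA.
canc. by canc.
Qed.

Lemma alg_MKM : (L *m Q) *m (invmx (L *m Q) *m X *m (invmx (L *m Q))^T) *m (L *m Q)^T = X.
Proof.
rewrite alg_Kc trmx_mul LT QT mulmxDr !mulmxDl -!scalemxAr -!scalemxAl !mulmxA.
canc. by canc.
Qed.
End Alg.

Section Main.
Variables (R : realType) (k c : nat) (src dst : 'I_(k + c) -> 'I_k.+1).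
Variables (w : 'I_(k + c) -> R) (eps : 'I_k.+1 -> R).
Hypothesis htree : spanning_tree src dst [pred l : 'I_(k + c) | (l < k)%N].
Hypothesis hw : forall l, 0 < w l.
Hypothesis heps : forall i, 0 < eps i.
Local Notation C := (R[i]).

Lemma toCM p q r (A : 'M[R]_(p, q)) (B : 'M[R]_(q, r)) : toC (A *m B) = toC A *m toC B.
Proof. exact: map_mxM. Qed.
Lemma toCT p q (A : 'M[R]_(p, q)) : toC A^T = (toC A)^T.
Proof. by apply/matrixP => i j; rewrite !mxE. Qed.
Lemma toCD p q (A B : 'M[R]_(p, q)) : toC (A + B) = toC A + toC B.
Proof. exact: map_mxD. Qed.
Lemma toCN p q (A : 'M[R]_(p, q)) : toC (- A) = - toC A.
Proof. exact: map_mxN. Qed.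
Lemma toCZ p q (a : R) (A : 'M[R]_(p, q)) : toC (a *: A) = a%:C%C *: toC A.
Proof. by apply/matrixP => i j; rewrite !mxE rmorphM. Qed.
Lemma toC1 p : toC (1%:M : 'M[R]_p) = 1%:M.
Proof. exact: map_mx1. Qed.
Lemma toCV p (A : 'M[R]_p) : toC (invmx A) = invmx (toC A).
Proof. exact: map_invmx. Qed.
Lemma toC_unit p (A : 'M[R]_p) : (toC A \in unitmx) = (A \in unitmx).
Proof. exact: map_unitmx. Qed.
Lemma toC_row p q r (A : 'M[R]_(p, q)) (B : 'M[R]_(p, r)) : toC (row_mx A B) = row_mx (toC A) (toC B).
Proof. exact: map_row_mx. Qed.
Lemma toC_inj p q (A B : 'M[R]_(p, q)) : toC A = toC B -> A = B.
Proof. by move=> /matrixP h; apply/matrixP => i j; have := h i j; rewrite !mxE => -[]. Qed.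

Local Notation Dt := (@Dtau R k c src dst).
Local Notation L := (Les src dst eps).
Local Notation Rr := (@Rm R k c src dst).
Local Notation W := (Wm w).
Local Notation Wh := (Whalf w).
Local Notation Eh := (Einvhalf eps).
Definition Q := Rr *m W *m Rr^T.
Definition YL := Dt^T *m Eh.
Definition YQ := Rr *m Wh.

Lemma EhE : Eh *m Eh^T = Einv eps.
Proof.
rewrite tr_diag_mx mulmx_diag /Einv; congr diag_mx; apply/rowP => i; rewrite !mxE.
by rewrite -invfM -expr2 sqr_sqrtr // ltW.
Qed.

Lemma WhE : Wh *m Wh^T = W.
Proof.
rewrite tr_diag_mx mulmx_diag /Wm; congr diag_mx; apply/rowP => i; rewrite !mxE.
by rewrite -expr2 sqr_sqrtr // ltW.
Qed.

Lemma LE : L = YL *m YL^T.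
Proof. by rewrite /YL trmx_mul trmxK !mulmxA -(mulmxA _ Eh) EhE. Qed.

Lemma QE : Q = YQ *m YQ^T.
Proof. by rewrite /YQ /Q trmx_mul !mulmxA -(mulmxA _ Wh) WhE. Qed.

Lemma LT : L^T = L.
Proof. by rewrite LE trmx_mul trmxK. Qed.

Lemma QT : Q^T = Q.
Proof. by rewrite QE trmx_mul trmxK. Qed.

Lemma Eh_inv : Eh *m diag_mx (\row_i Num.sqrt (eps i)) = 1%:M.
Proof.
rewrite mulmx_diag; apply/matrixP => i j; rewrite !mxE mulVf //.
by rewrite gt_eqF // sqrtr_gt0.
Qed.

Lemma Wh_inv : Wh *m diag_mx (\row_i (Num.sqrt (w i))^-1) = 1%:M.
Proof.
rewrite mulmx_diag; apply/matrixP => i j; rewrite !mxE mulfV //.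
by rewrite gt_eqF // sqrtr_gt0.
Qed.

Lemma PDL (v : 'rV[C]_k) : v *m toC YL = 0 -> v = 0.
Proof.
move=> h.
have h2 : v *m toC Dt^T = 0.
  have := congr1 (mulmx^~ (toC (diag_mx (\row_i Num.sqrt (eps i))))) h.
  by rewrite mul0mx /YL toCM mulmxA -(mulmxA _ _ (toC _)) -toCM Eh_inv toC1 mulmx1.
have rf : row_free (toC Dt^T).
  by rewrite /row_free mxrank_map mxrank_tr rank_Dtau.
by apply/eqP; rewrite -(mulmx_free_eq0 _ rf); apply/eqP.
Qed.

Lemma PDQ (v : 'rV[C]_k) : v *m toC YQ = 0 -> v = 0.
Proof.
move=> h.
have h2 : v *m toC Rr = 0.
  have := congr1 (mulmx^~ (toC (diag_mx (\row_i (Num.sqrt (w i))^-1)))) h.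
  by rewrite mul0mx /YQ toCM mulmxA -(mulmxA _ _ (toC _)) -toCM Wh_inv toC1 mulmx1.
move: h2; rewrite /Rm toC_row toC1 mul_mx_row mulmx1 => /eqP.
by rewrite row_mx_eq0 => /andP [/eqP -> _].
Qed.

Lemma unit_of_ker p (A : 'M[C]_p) : (forall v : 'rV[C]_p, v *m A = 0 -> v = 0) -> A \in unitmx.
Proof.
move=> h; rewrite unitmxE unitfE; apply/negP => /det0P [v v0 hv].
by rewrite (h v hv) eqxx in v0.
Qed.

Lemma toC_gram p q (Y : 'M[R]_(p, q)) : toC (Y *m Y^T) = toC Y *m conjT (toC Y).
Proof. by rewrite conjT_toC toCM. Qed.

Lemma unitL : L \in unitmx.
Proof.
rewrite -toC_unit; apply: unit_of_ker => v hv; apply: PDL; apply: nrm2_eq0.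
by rewrite -quad_nrm2 -toC_gram -LE hv mul0mx mxE.
Qed.

Lemma unitQ : Q \in unitmx.
Proof.
rewrite -toC_unit; apply: unit_of_ker => v hv; apply: PDQ; apply: nrm2_eq0.
by rewrite -quad_nrm2 -toC_gram -QE hv mul0mx mxE.
Qed.

Lemma invmx_mul p (A B : 'M[R]_p) : A \in unitmx -> B \in unitmx ->
  invmx (A *m B) = invmx B *m invmx A.
Proof.
move=> uA uB.
have uAB : A *m B \in unitmx by rewrite unitmx_mul uA uB.
have e : A *m B *m (invmx B *m invmx A) = 1%:M.
  by rewrite !mulmxA -(mulmxA A) mulmxV // mulmx1 mulmxV.
by rewrite -[LHS]mulmx1 -e mulmxA mulVmx // mul1mx.
Qed.

Definition M := L *m Rr *m W *m Rr^T.
Lemma ME : M = L *m Q.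
Proof. by rewrite /M /Q !mulmxA. Qed.

Local Notation iL := (invmx L).
Local Notation iQ := (invmx Q).

Lemma unitM : M \in unitmx.
Proof. by rewrite ME unitmx_mul unitL unitQ. Qed.

Lemma iME : invmx M = iQ *m iL.
Proof. by rewrite ME invmx_mul // ?unitL ?unitQ. Qed.

Lemma iMTE : (invmx M)^T = iL *m iQ.
Proof. by rewrite iME trmx_mul !trmx_inv LT QT. Qed.

Lemma iLT : iL^T = iL.
Proof. by rewrite trmx_inv LT. Qed.
Lemma iQT : iQ^T = iQ.
Proof. by rewrite trmx_inv QT. Qed.

Variables sw sv : R.

Definition B := row_mx (sw *: (Dt^T *m Eh)) (- (sv *: (L *m Rr *m Wh))).
Definition X := B *m B^T.

Lemma XE : X = sw ^+ 2 *: L + sv ^+ 2 *: (L *m Q *m L).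
Proof.
rewrite /X /B tr_row_mx mul_row_col.
congr (_ + _).
  by rewrite linearZ /= -scalemxAl -scalemxAr scalerA -expr2 LE.
rewrite linearN /= mulNmx mulmxN opprK linearZ /= -scalemxAl -scalemxAr scalerA -expr2.
by rewrite QE /YQ [(L *m Rr *m Wh)^T]trmx_mul [(L *m Rr)^T]trmx_mul [(Rr *m Wh)^T]trmx_mul LT !mulmxA.
Qed.

Definition Kc := invmx M *m X *m (invmx M)^T.

Lemma KcE : Kc = sw ^+ 2 *: (iQ *m iL *m iQ) + sv ^+ 2 *: iQ.
Proof. by rewrite /Kc ME XE alg_Kc ?unitL ?unitQ ?LT ?QT. Qed.

Lemma Kc_gram : Kc = (invmx M *m B) *m (invmx M *m B)^T.
Proof. by rewrite /Kc /X trmx_mul !mulmxA. Qed.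

Lemma ZmE : Zm src dst w eps sw sv = Rr^T *m Kc *m Rr.
Proof.
rewrite /Zm.
have -> : Rr *m W *m Rr^T *m L *m Rr *m W *m Rr^T = Q *m L *m Q by rewrite /Q !mulmxA.
rewrite -/Q alg_inv3 ?unitL ?unitQ // KcE.
by rewrite mulmxDr mulmxDl -!scalemxAr -!scalemxAl !mulmxA.
Qed.

Lemma MKc : M *m Kc = Kc *m M^T.
Proof. by rewrite /Kc ME XE alg_comm ?unitL ?unitQ ?LT ?QT. Qed.

Lemma MKM : M *m Kc *m M^T = X.
Proof. by rewrite /Kc ME XE alg_MKM ?unitL ?unitQ ?LT ?QT. Qed.

Section Freq.
Variable om : R.
Local Notation a := ((0 +i* om)%C : C).
Definition H := a%:M + toC M.
Local Notation G := (invmx H).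

Lemma unitH : H \in unitmx.
Proof.
apply: unit_of_ker => v hv.
have e1 : v *m toC M = - (a *: v).
  by apply/eqP; rewrite -addr_eq0 -mul_mx_scalar -mulmxDr addrC hv.
set z := v *m toC L.
have e2 : z *m toC Q = - (a *: v) by rewrite /z -mulmxA -toCM -ME.
have e3 : conjT z = toC L *m conjT v by rewrite /z conjT_mul conjT_toC LT.
have e4 : nrm2 (z *m toC YQ) = - (a * nrm2 (v *m toC YL)).
  rewrite -quad_nrm2 -toC_gram -QE e2 e3 mulNmx -scalemxAl mulmxA.
  by rewrite -quad_nrm2 -toC_gram -LE mxE mxE.
have hb := ge0_Cre (nrm2_ge0 (v *m toC YL)).
have ha := ge0_Cre (nrm2_ge0 (z *m toC YQ)).
have z0 : nrm2 (z *m toC YQ) = 0.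
  rewrite ha; move: e4; rewrite {1}ha hb => /(congr1 (@complex.Re R)) /= ->.
  by rewrite !mul0r !mulr0 subr0 oppr0.
have /PDQ zz : z *m toC YQ = 0 by apply: nrm2_eq0.
apply: PDL; apply: nrm2_eq0.
by rewrite -quad_nrm2 -toC_gram -LE -/z zz mul0mx mxE.
Qed.

Lemma conjTH : conjT H = (Num.conj a)%:M + toC M^T.
Proof. by rewrite /H conjTD conjT_scalar conjT_toC. Qed.

Lemma conjT1 p : conjT (1%:M : 'M[C]_p) = 1%:M.
Proof. by rewrite conjT_scalar rmorph1. Qed.

Lemma HKH : H *m toC Kc *m conjT H = toC X + (om ^+ 2)%:C%C *: toC Kc.
Proof.
rewrite conjTH /H !mulmxDl !mulmxDr !mul_scalar_mx !mul_mx_scalar.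
rewrite -!scalemxAl -!toCM MKM MKc !scalerA.
have -> : Num.conj a * a = (om ^+ 2)%:C%C.
  by simpc; rewrite expr2.
rewrite -!addrA (addrA (_ *: toC (Kc *m M^T))) -scalerDl.
have -> : a + Num.conj a = 0 by simpc.
by rewrite scale0r add0r addrC.
Qed.

Lemma GKcE : toC Kc = G *m toC X *m conjT G + (om ^+ 2)%:C%C *: (G *m toC Kc *m conjT G).
Proof.
have -> : G *m toC X *m conjT G + (om ^+ 2)%:C%C *: (G *m toC Kc *m conjT G)
    = G *m (H *m toC Kc *m conjT H) *m conjT G.
  by rewrite HKH mulmxDr mulmxDl -scalemxAr -scalemxAl.
rewrite !mulmxA mulVmx ?unitH // mul1mx -!mulmxA -conjT_mul mulVmx ?unitH //.
by rewrite conjT1 mulmx1.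
Qed.

Definition Sg := toC Rr^T *m G *m toC B.
Definition Yg := toC Rr^T *m G *m toC (invmx M *m B).

Lemma SgE : Sigma_tilde src dst w eps sw sv a = Sg.
Proof. by rewrite /Sigma_tilde /Sg /B toC_row. Qed.

Lemma ZcE : toC (Zm src dst w eps sw sv) = Sg *m conjT Sg + (om ^+ 2)%:C%C *: (Yg *m conjT Yg).
Proof.
rewrite ZmE 2!toCM GKcE /Sg /Yg.
rewrite (conjT_mul (toC Rr^T *m G) (toC B)) (conjT_mul (toC Rr^T *m G)).
rewrite (conjT_mul (toC Rr^T) G) (conjT_toC Rr^T) trmxK.
rewrite (conjT_toC B) (conjT_toC (invmx M *m B)).
rewrite /X Kc_gram (toCM B B^T) (toCM (invmx M *m B)).
rewrite mulmxDr mulmxDl -scalemxAr -scalemxAl.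
by rewrite !mulmxA.
Qed.
End Freq.

Hypothesis hk : (1 <= k)%N.

Lemma main_eq : hinf_norm (Sigma_tilde src dst w eps sw sv) ^+ 2
  = sigma_max_real (Zm src dst w eps sw sv).
Proof.
set S0 := Sg 0.
have Z0 : toC (Zm src dst w eps sw sv) = S0 *m conjT S0.
  by rewrite (ZcE 0) expr0n /= rmorph0 scale0r addr0.
have i0 : 'I_(k + c) by exists 0%N; lia.
have [lam [lam0 hb [us us0 hus]]] := spec_max i0 S0.
rewrite -Z0 in hus hb.
have hbw : forall om (u : 'rV[C]_(k + c)),
    (u *m (Sg om *m conjT (Sg om)) *m conjT u) 0 0 <= lam%:C%C * nrm2 u.
  move=> om u; apply: le_trans (hb u).
  rewrite (ZcE om) quad_add lerDl; apply: mulr_ge0.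
    by rewrite ler0c sqr_ge0.
  by rewrite quad_nrm2 nrm2_ge0.
have supw : forall om, sup [set x : R | eigenvalue (conjT (Sg om) *m Sg om) x%:C%C] <= lam.
  by move=> om; apply: sup_le_ub' => // x; apply: eig_bound.
have sup0E : sup [set x : R | eigenvalue (conjT S0 *m S0) x%:C%C] = lam.
  have [lamp|lamz] := boolP (0 < lam).
    apply: sup_eq_max; last by move=> x; apply: (eig_bound lam0 (hbw 0)).
    apply/eigenvalueP; exists (us *m S0).
      by rewrite mulmxA -(mulmxA us) -Z0 hus -scalemxAl.
    apply/eqP => h; have := hus; rewrite Z0 mulmxA h mul0mx => /esym/eqP.
    rewrite scalemx_eq0 (negbTE us0) orbF => /eqP /(congr1 (@complex.Re R)) /= l0.
    by rewrite l0 ltxx in lamp.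
  have l0 : lam = 0 by apply/eqP; rewrite eq_le lam0 andbT leNgt.
  rewrite l0; apply: sup_zero => x hx; apply/eqP; rewrite eq_le.
  rewrite (eig_ge0 hx) andbT -l0; exact: (eig_bound lam0 (hbw 0) hx).
have hinfE : hinf_norm (Sigma_tilde src dst w eps sw sv) = Num.sqrt lam.
  apply: sup_eq_max.
    by exists 0 => //; rewrite /sigma_max SgE -/S0 sup0E.
  by move=> y [om _ <-]; rewrite /sigma_max SgE ler_wsqrtr.
rewrite hinfE sqr_sqrtr //.
have -> : sigma_max_real (Zm src dst w eps sw sv) = sigma_max (toC (Zm src dst w eps sw sv)) by [].
rewrite /sigma_max.
set Zc := toC (Zm src dst w eps sw sv).
have ZcT : conjT Zc = Zc by rewrite /Zc Z0 conjT_mul conjTK.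
suff -> : sup [set x : R | eigenvalue (conjT Zc *m Zc) x%:C%C] = lam ^+ 2.
  by rewrite sqrtr_sqr ger0_norm.
apply: sup_eq_max.
  apply/eigenvalueP; exists us => //.
  by rewrite ZcT mulmxA hus -scalemxAl hus scalerA expr2 rmorphM.
move=> x hx; have x0 := eig_ge0 hx.
move: hx; rewrite ZcT => /eigenvalueP [v hv v0].
set s := Num.sqrt x.
have xs : x%:C%C = s%:C%C * s%:C%C by rewrite -rmorphM -expr2 sqr_sqrtr.
have s0 : 0 <= s by apply: sqrtr_ge0.
have vq : (v *m Zc *m conjT v) 0 0 = nrm2 (v *m S0) by rewrite /Zc Z0 quad_nrm2.
set t := v *m Zc + s%:C%C *: v.
have [t0|tn0] := eqVneq t 0.
  have e : v *m Zc = - (s%:C%C *: v) by apply/eqP; rewrite -addr_eq0 -/t t0.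
  have sc : forall (a : C) (A : 'M[C]_1), (a *: A) 0 0 = a * A 0 0 by move=> *; rewrite mxE.
  have := nrm2_ge0 (v *m S0); rewrite -vq e mulNmx -scalemxAl mxE sc -/(nrm2 v).
  rewrite oppr_ge0 pmulr_lle0 ?nrm2_gt0 // lecE => /andP [_ sle] ; simpl in sle.
  have -> : x = 0.
    have s00 : s = 0 by apply/le_anti; rewrite sle s0.
    by rewrite -(sqr_sqrtr x0) -/s s00 expr0n.
  by rewrite sqr_ge0.
have ht : t *m Zc = s%:C%C *: t.
  rewrite /t mulmxDl -mulmxA hv -scalemxAl scalerDr scalerA -xs addrC.
  by [].
have := hb t; rewrite ht -scalemxAl mxE -/(nrm2 t) ler_pM2r ?nrm2_gt0 // lecR => sl.
by rewrite -(sqr_sqrtr x0) -/s lerXn2r // nnegrE.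
Qed.
End Main.

Theorem theorem1 (R : realType) (k c : nat) (hk : (1 <= k)%N)
  (src dst : 'I_(k + c) -> 'I_k.+1)
  (hloop : no_self_loops src dst) (hdist : distinct_edges src dst)
  (hconn : connected_in src dst predT)
  (htree : spanning_tree src dst [pred l : 'I_(k + c) | (l < k)%N])
  (w : 'I_(k + c) -> R) (hw : forall l, 0 < w l)
  (eps : 'I_k.+1 -> R) (heps : forall i, 0 < eps i)
  (sw sv : R) :
  hinf_norm (Sigma_tilde src dst w eps sw sv) ^+ 2
  = sigma_max_real (Zm src dst w eps sw sv).
Proof.
exact: (main_eq htree hw heps sw sv hk).
Qed.
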